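(* Let $h:\{0,1\}^n\to\{\pm1\}$ be such that $(1-h)/2$ is monotone. Then for every $0\le r\le n-1$, $\mu(h|_{r+1})\ge\mu(h|_r)+\frac1n\mathbf I[h|_r]$, and consequently $\frac1n\sum_{r=0}^{n-1}\mathbf I[h|_r]\le\mu(h|_n)-\mu(h|_0)\le1$.
   Context: A function $g:\{0,1\}^n\to\{0,1\}$ is monotone if $x\preceq y$ coordinatewise implies $g(x)\le g(y)$. For $0\le r\le n$, $\binom{[n]}{r}=\{x\in\{0,1\}^n:\sum_ix_i=r\}$ with the uniform distribution; $h|_r$ is the restriction of $h$ to it, and $\mu(h|_r)=|\{x\in\binom{[n]}{r}:h(x)=-1\}|/\binom nr$. For $g:\binom{[n]}{r}\to\{\pm1\}$, $\mathbf I_{ij}[g]=2\Pr_x[g(x^{(i,j)})\ne g(x)]$ with $x^{(i,j)}$ obtained by swapping coordinates $i,j$, and $\mathbf I[g]=\frac1n\sum_{1\le i<j\le n}\mathbf I_{ij}[g]$. *)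

(* Defs.v *)
From mathcomp Require Import all_boot all_order all_algebra.
From mathcomp Require Import fingroup perm.
Set Implicit Arguments. Unset Strict Implicit. Unset Printing Implicit Defensive.
Import Order.TTheory GRing.Theory Num.Theory.

(* Points of {0,1}^n are finite functions 'I_n -> bool (true = 1). *)
Definition cube (n : nat) := {ffun 'I_n -> bool}.

Definition weight n (x : cube n) : nat := \sum_(i < n) (x i : nat).

Definition cube_le n (x y : cube n) : Prop := forall i, x i <= y i.

Definition monotone_bool n (g : cube n -> bool) : Prop :=
  forall x y, cube_le x y -> g x <= g y.

Definition pm1_valued n (h : cube n -> int) : Prop :=
  forall x, h x = 1%R \/ h x = (-1)%R.

(* (1-h)/2 as a {0,1}-valued function: 1 iff h x = -1 *)
Definition half_one_minus n (h : cube n -> int) : cube n -> bool :=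
  fun x => h x == (-1)%R.

Definition mu_slice n (h : cube n -> int) (r : nat) : rat :=
  (#|[set x : cube n | (weight x == r) && (h x == (-1)%R)]|%:R / 'C(n, r)%:R)%R.

Definition swapc n (x : cube n) (i j : 'I_n) : cube n :=
  [ffun k => x (tperm i j k)].

Definition infl_ij n (h : cube n -> int) (r : nat) (i j : 'I_n) : rat :=
  (2 * (#|[set x : cube n | (weight x == r) && (h (swapc x i j) != h x)]|%:R
        / 'C(n, r)%:R))%R.

Definition infl_slice n (h : cube n -> int) (r : nat) : rat :=
  ((n%:R)^-1 * \sum_(i < n) \sum_(j < n | (i < j)%N) infl_ij h r i j)%R.

(* Main.v *)
Require Import Defs.
From mathcomp Require Import all_boot all_order all_algebra.
From mathcomp Require Import fingroup perm.
From mathcomp Require Import zify ring lra.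
Import Order.TTheory GRing.Theory Num.Theory.
Set Implicit Arguments. Unset Strict Implicit.

Definition setb n (x : cube n) (j : 'I_n) (b : bool) : cube n :=
  [ffun k => if k == j then b else x k].

Lemma setbE n (x : cube n) j b k : setb x j b k = if k == j then b else x k.
Proof. by rewrite ffunE. Qed.

Definition flip n j (x : cube n) := setb x j (~~ x j).

Lemma flipK n j : involutive (@flip n j).
Proof.
move=> x; apply/ffunP=> k; rewrite /flip !setbE.
by case: eqP=> [->|//]; rewrite eqxx negbK.
Qed.

Lemma sum_flip n j (F : cube n -> nat) :
  \sum_(x : cube n) (~~ x j) * F x = \sum_(x : cube n) (x j) * F (setb x j false).
Proof.
rewrite (reindex_inj (inv_inj (@flipK n j))) /=.
apply: eq_bigr => x _; rewrite /flip setbE eqxx negbK.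
by case: (x j).
Qed.

Lemma weight_setb n (x : cube n) j b : weight (setb x j b) + x j = weight x + b.
Proof.
rewrite /weight (bigD1 j) //= [in RHS](bigD1 j) //= setbE eqxx.
under eq_bigr => k /negbTE nkj do rewrite setbE nkj.
lia.
Qed.

Lemma setbK n (y : cube n) j : y j -> setb (setb y j false) j true = y.
Proof.
move=> yj; apply/ffunP=> k; rewrite !setbE.
by case: eqP => // ->.
Qed.

Lemma setb2 n (y : cube n) j b c : setb (setb y j b) j c = setb y j c.
Proof. by apply/ffunP=> k; rewrite !setbE; case: eqP. Qed.

Lemma swap_setb n (x : cube n) i j : x i -> ~~ x j ->
  swapc x i j = setb (setb x j true) i false.
Proof.
move=> xi xj; apply/ffunP=> k; rewrite /swapc ffunE !setbE.
case: tpermP => [->|->|/eqP nki /eqP nkj].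
- by rewrite eqxx; apply/negbTE.
- case: eqP => [eji|_]; last by rewrite eqxx.
  by rewrite eji xi in xj.
- by rewrite (negbTE nki) (negbTE nkj).
Qed.

Lemma swap_eq n (x : cube n) i j : x i = x j -> swapc x i j = x.
Proof.
move=> e; apply/ffunP=> k; rewrite /swapc ffunE.
by case: tpermP => [->|->|//].
Qed.

Lemma swapC n (x : cube n) i j : swapc x j i = swapc x i j.
Proof. by rewrite /swapc tpermC. Qed.

Lemma le_set1 n (x : cube n) j : cube_le x (setb x j true).
Proof. by move=> k; rewrite setbE; case: eqP => //; case: (x k). Qed.

Lemma le_set0 n (x : cube n) j : cube_le (setb x j false) x.
Proof. by move=> k; rewrite setbE; case: eqP => //; case: (x k). Qed.

Lemma card_sumb n (P : pred (cube n)) : #|[set x | P x]| = \sum_(x : cube n) (P x : nat).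
Proof.
rewrite -sum1_card big_mkcond /=; apply: eq_bigr => x _.
by rewrite inE; case: (P x).
Qed.

Lemma sum_bits n (x : cube n) : \sum_i (~~ x i : nat) = n - weight x.
Proof.
have : \sum_i (~~ x i : nat) + weight x = n.
  rewrite /weight -big_split /= -[in RHS](card_ord n) -sum1_card.
  by apply: eq_bigr => i _; case: (x i).
lia.
Qed.

Definition Bc n (a : cube n -> bool) r : nat :=
  \sum_(i < n) \sum_(y : cube n)
     ((weight y == r.+1) * a y * y i * ~~ a (setb y i false)).

Lemma wt_down n (y : cube n) i r : y i ->
  (weight (setb y i false) == r) = (weight y == r.+1).
Proof.
move=> yi; have w := weight_setb y i false; rewrite yi /= addn1 addn0 in w.
by rewrite -w eqSS.
Qed.

Lemma part1 n (a : cube n -> bool) (ma : forall x y, cube_le x y -> a x <= a y) r :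
  \sum_(i < n) \sum_(x : cube n) ((weight x == r.+1) * a x * x i) =
  \sum_(i < n) \sum_(x : cube n) ((weight x == r) * a x * ~~ x i) + Bc a r.
Proof.
rewrite /Bc -big_split; apply: eq_bigr => i _ /=.
have -> : \sum_(x : cube n) ((weight x == r) * a x * ~~ x i) =
   \sum_(y : cube n) (y i * ((weight (setb y i false) == r) * a (setb y i false))).
  by rewrite -(sum_flip i (fun x => (weight x == r) * a x)); apply: eq_bigr => x _; rewrite mulnC.
rewrite -big_split; apply: eq_bigr => y _ /=.
case yi: (y i); last by rewrite !muln0 mul0n.
rewrite wt_down //.
have m := ma _ _ (le_set0 y i).
by case: (a y) (a (setb y i false)) m => [] [] //= _; case: (weight y == r.+1).
Qed.

Definition Tc n (a : cube n -> bool) r (i j : 'I_n) : nat :=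
  \sum_(x : cube n) ((weight x == r) * x i * ~~ x j * (a (swapc x i j) != a x)).

Definition Uc n (a : cube n -> bool) r (i j : 'I_n) : nat :=
  \sum_(y : cube n) ((weight y == r.+1) * y j * (i != j) * y i * a y *
     (~~ a (setb y i false) + ~~ a (setb y j false))).

Lemma cnt_split n (a : cube n -> bool) r i j :
  \sum_(x : cube n) ((weight x == r) * (a (swapc x i j) != a x)) = Tc a r i j + Tc a r j i.
Proof.
rewrite /Tc -big_split; apply: eq_bigr => x _ /=; rewrite (swapC x j i).
case: (weight x == r); rewrite ?mul0n //.
case xi: (x i); case xj: (x j) => //=; rewrite ?addn0 ?muln0 ?mul0n //.
- by rewrite swap_eq ?xi ?xj // eqxx.
- by rewrite swap_eq ?xi ?xj // eqxx.
Qed.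

Lemma step_b n (T : 'I_n -> 'I_n -> nat) :
  \sum_(i < n) \sum_(j < n | (i < j)%N) (T i j + T j i) <= \sum_(i < n) \sum_(j < n) T i j.
Proof.
under eq_bigr => i _ do rewrite big_split.
rewrite big_split /=.
rewrite [X in _ + X <= _](eq_bigr (fun i : 'I_n => \sum_(j < n) ((i < j)%N * T j i))); last first.
  move=> i _; rewrite big_mkcond /=; apply: eq_bigr => j _; by case: (i < j)%N; rewrite ?mul1n ?mul0n.
rewrite [X in X + _ <= _](eq_bigr (fun i : 'I_n => \sum_(j < n) ((i < j)%N * T i j))); last first.
  move=> i _; rewrite big_mkcond /=; apply: eq_bigr => j _; by case: (i < j)%N; rewrite ?mul1n ?mul0n.
rewrite [X in _ + X <= _]exchange_big /= -big_split /=.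
apply: leq_sum => i _; rewrite -big_split /=; apply: leq_sum => j _.
rewrite -mulnDl; rewrite -[leqRHS]mul1n; apply: leq_mul => //.
by case: ltngtP.
Qed.

Lemma step_c n (a : cube n -> bool) (ma : forall x y, cube_le x y -> a x <= a y) r i j :
  Tc a r i j <= Uc a r i j.
Proof.
rewrite /Tc /Uc.
have -> : \sum_(x : cube n) ((weight x == r) * x i * ~~ x j * (a (swapc x i j) != a x)) =
  \sum_(x : cube n) (~~ x j * ((weight x == r) * x i * (a (swapc x i j) != a x))).
  by apply: eq_bigr => x _; case: (weight x == r) (x i) (x j) (a (swapc x i j) != a x) => [] [] [] [].
rewrite (sum_flip j (fun x => (weight x == r) * x i * (a (swapc x i j) != a x))).
apply: leq_sum => y _.
case yj: (y j); rewrite ?mul0n //= !mul1n.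
rewrite setbE; case: (eqVneq i j) => [->|nij]; first by rewrite ?eqxx ?mul0n ?muln0.
case yi: (y i); rewrite ?muln0 ?mul0n //=.
rewrite wt_down // swap_setb; first last.
- by rewrite setbE eqxx.
- by rewrite setbE (negbTE nij).
rewrite setbK // !muln1.
case: (weight y == r.+1); rewrite ?mul0n //= !mul1n.
have m1 := ma _ _ (le_set0 y i); have m2 := ma _ _ (le_set0 y j).
by case: (a y) (a (setb y i false)) (a (setb y j false)) m1 m2 => [] [] [].
Qed.

Lemma sum_others n (y : cube n) i : \sum_(j < n) (y j * (i != j)) + y i = weight y.
Proof.
rewrite /weight [RHS](bigD1 i) //= addnC; congr (_ + _).
rewrite [RHS]big_mkcond /=; apply: eq_bigr => j _.
by rewrite eq_sym; case: (j == i); rewrite ?muln0 ?muln1.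
Qed.

Lemma step_d n (a : cube n -> bool) r :
  \sum_(i < n) \sum_(j < n) Uc a r i j = 2 * r * Bc a r.
Proof.
pose V (i j : 'I_n) := \sum_(y : cube n) ((weight y == r.+1) * y j * (i != j) * y i * a y *
     ~~ a (setb y i false)).
have eU : forall i j, Uc a r i j = V i j + V j i.
  move=> i j; rewrite /Uc /V -big_split; apply: eq_bigr => y _ /=.
  rewrite (eq_sym j i).
  by case: (weight y == r.+1) (y i) (y j) (i != j) (a y) (a (setb y i false))
     (a (setb y j false)) => [] [] [] [] [] [] [].
under eq_bigr => i _ do under eq_bigr => j _ do rewrite eU.
under eq_bigr => i _ do rewrite big_split.
rewrite big_split /= [X in _ + X]exchange_big /= addnn -mul2n -mulnA; congr (2 * _).
rewrite /Bc big_distrr /=; apply: eq_bigr => i _.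
rewrite /V exchange_big big_distrr /=; apply: eq_bigr => y _.
have -> : \sum_(j < n) ((weight y == r.+1) * y j * (i != j) * y i * a y * ~~ a (setb y i false))
   = ((weight y == r.+1) * y i * a y * ~~ a (setb y i false)) * \sum_(j < n) (y j * (i != j)).
  rewrite big_distrr /=; apply: eq_bigr => j _.
  by case: (weight y == r.+1) (y i) (y j) (i != j) (a y) (a (setb y i false)) => [] [] [] [] [] [].
have so := sum_others y i.
case yi: (y i) so; rewrite ?muln0 ?mul0n //=.
move=> so; case: eqP => [wy|]; last by rewrite /= ?mul0n ?muln0.
rewrite wy addn1 in so; case: so => ->.
by rewrite /= !mul1n !muln1 mulnC.
Qed.

Definition Sc n (h : cube n -> int) r :=
  #|[set x : cube n | (weight x == r) && (h x == (-1)%R)]|.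
Definition cij n (h : cube n -> int) r (i j : 'I_n) :=
  #|[set x : cube n | (weight x == r) && (h (swapc x i j) != h x)]|.
Definition Cc n (h : cube n -> int) r := \sum_(i < n) \sum_(j < n | (i < j)%N) cij h r i j.

Lemma pm1_neq n (h : cube n -> int) : pm1_valued h -> forall u v,
  (h u != h v) = (half_one_minus h u != half_one_minus h v).
Proof.
move=> pm u v; rewrite /half_one_minus.
by case: (pm u) => ->; case: (pm v) => ->.
Qed.

Lemma nat_facts n (h : cube n -> int) r :
  pm1_valued h -> monotone_bool (half_one_minus h) ->
  r.+1 * Sc h r.+1 = (n - r) * Sc h r + Bc (half_one_minus h) r /\
  Cc h r <= 2 * r * Bc (half_one_minus h) r.
Proof.
move=> pm mo; set a := half_one_minus h.
have ma : forall x y, cube_le x y -> a x <= a y by [].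
have eS : forall s, Sc h s = \sum_(x : cube n) ((weight x == s) * a x).
  move=> s; rewrite /Sc (card_sumb (fun x : cube n => (weight x == s) && (h x == (-1)%R))).
  by apply: eq_bigr => x _; case: (weight x == s); rewrite /= ?mul1n ?mul0n.
split.
- have eP : \sum_(i < n) \sum_(x : cube n) ((weight x == r.+1) * a x * x i) = r.+1 * Sc h r.+1.
    rewrite exchange_big eS big_distrr /=; apply: eq_bigr => x _.
    rewrite -big_distrr /=.
    by case: eqP => [<-|]; rewrite ?mul1n ?mul0n ?muln0 // mulnC.
  have eQ : \sum_(i < n) \sum_(x : cube n) ((weight x == r) * a x * ~~ x i) = (n - r) * Sc h r.
    rewrite exchange_big eS big_distrr /=; apply: eq_bigr => x _.
    rewrite -big_distrr /= sum_bits.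
    by case: eqP => [->|]; rewrite ?mul1n ?mul0n ?muln0 // mulnC.
  by rewrite -eP -eQ; apply: part1.
- apply: (leq_trans _ (eq_leq (step_d a r))).
  apply: (@leq_trans (\sum_(i < n) \sum_(j < n) Tc a r i j)); last first.
    by apply: leq_sum => i _; apply: leq_sum => j _; apply: step_c.
  apply: leq_trans (step_b _); apply: eq_leq; rewrite /Cc.
  apply: eq_bigr => i _; apply: eq_bigr => j _.
  rewrite -cnt_split /cij (card_sumb (fun x : cube n => (weight x == r) && (h (swapc x i j) != h x))).
  apply: eq_bigr => x _.
  by rewrite (pm1_neq pm); case: (weight x == r); rewrite /= ?mul1n ?mul0n.
Qed.

Lemma infl_sum n (h : cube n -> int) r :
  (\sum_(i < n) \sum_(j < n | (i < j)%N) infl_ij h r i j =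
   (2 * Cc h r)%:R / ('C(n, r))%:R :> rat)%R.
Proof.
rewrite /Cc natrM natr_sum mulr_sumr mulr_suml; apply: eq_bigr => i _.
rewrite natr_sum mulr_sumr mulr_suml; apply: eq_bigr => j _.
by rewrite /infl_ij mulrA.
Qed.

Lemma slice_ineq n (h : cube n -> int) r :
  pm1_valued h -> monotone_bool (half_one_minus h) -> (r < n)%N ->
  (mu_slice h r.+1 >= mu_slice h r + (n%:R)^-1 * infl_slice h r)%R.
Proof.
move=> pm mo rn.
have [e1 e2] := nat_facts r pm mo.
set B := Bc _ r in e1 e2; set C := Cc h r in e2.
set S := Sc h r in e1; set S' := Sc h r.+1 in e1.
have h4 : (4 * r * (n - r) <= n ^ 2)%N.
  have h4' : forall m, (4 * r * m <= (r + m) ^ 2)%N by move=> m; rewrite -mulnA; apply: (nat_AGM2 r m).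
  by have := h4' (n - r); rewrite subnKC // ltnW.
have N : (2 * C * (n - r) <= n ^ 2 * B)%N.
  have a1 := leq_mul (leq_mul (leqnn 2) e2) (leqnn (n - r)).
  have a2 := leq_mul h4 (leqnn B).
  apply: leq_trans a1 _; apply: leq_trans _ a2.
  by rewrite !mulnA [(2 * 2 * r * B * (n - r))%N]mulnAC.
have Kp : (0 < 'C(n, r))%N by rewrite bin_gt0 ltnW.
have Kp' : (0 < 'C(n, r.+1))%N by rewrite bin_gt0.
have eK := mul_bin_left n r.
have -> : mu_slice h r = (S%:R / ('C(n, r))%:R)%R by [].
have -> : mu_slice h r.+1 = (S'%:R / ('C(n, r.+1))%:R)%R by [].
rewrite /infl_slice infl_sum.
have -> : (S'%:R / ('C(n, r.+1))%:R = ((n - r) * S + B)%:R / ((n - r) * 'C(n, r))%:R :> rat)%R.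
  by rewrite -e1 -eK !natrM -mulf_div divff ?mul1r // pnatr_eq0.
set m := (n - r)%N in N e1 eK *.
have mp : (0 < m)%N by rewrite /m subn_gt0.
have np : (0 < n)%N by lia.
rewrite -subr_ge0.
have -> : (((m * S + B)%:R / (m * 'C(n, r))%:R -
   (S%:R / ('C(n, r))%:R + n%:R^-1 * (n%:R^-1 * ((2 * C)%:R / ('C(n, r))%:R)))) =
   ((n ^ 2 * B)%:R - (2 * C * m)%:R) / ((n ^ 2 * m * 'C(n, r))%:R) :> rat)%R.
  rewrite !natrM !natrD ?natrX.
  field.
  by rewrite !pnatr_eq0 -!lt0n Kp mp np.
apply: divr_ge0; last by apply: ler0n.
by rewrite subr_ge0 ler_nat.
Qed.

Lemma top_le1 n (h : cube n -> int) : (mu_slice h n <= 1)%R.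
Proof.
rewrite /mu_slice binn divr1.
suff H : (#|[set x : cube n | (weight x == n) && (h x == (-1)%R)]| <= 1)%N.
  by rewrite -(@ler_nat rat) in H.
have -> : (1 = #|[set [ffun => true] : cube n]|)%N by rewrite cards1.
apply: subset_leq_card; apply/subsetP => x; rewrite !inE => /andP[/eqP wx _].
have := sum_bits x; rewrite wx subnn => /eqP; rewrite sum_nat_eq0 => /forallP al.
apply/eqP/ffunP => i; rewrite ffunE; have := al i; by case: (x i).
Qed.

Lemma mu_ge0 n (h : cube n -> int) r : (0 <= mu_slice h r)%R.
Proof. by rewrite /mu_slice divr_ge0 ?ler0n. Qed.

Unset Implicit Arguments.
Theorem mainTheorem6 (n : nat) (h : cube n -> int) :
  pm1_valued h ->
  monotone_bool (half_one_minus h) ->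
  (forall r : nat, (r < n)%N ->
     (mu_slice h r.+1 >= mu_slice h r + (n%:R)^-1 * infl_slice h r)%R) /\
  ((n%:R)^-1 * \sum_(0 <= r < n) infl_slice h r <= mu_slice h n - mu_slice h 0
   <= 1)%R.
Proof.
move=> pm mo; split; first by move=> r rn; apply: slice_ineq.
apply/andP; split.
- rewrite -(@telescope_sumr _ 0 n (mu_slice h)) // mulr_sumr.
  apply: ler_sum_nat => r /andP[_ rn].
  have := slice_ineq pm mo rn; lra.
- have := top_le1 h; have := mu_ge0 h 0; lra.
Qed.
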